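(* Let $n\ge 2$, $\rho^*\ge0$, $s>0$, and $k_\rho,k_z,k_\phi>0$. Consider the closed-loop system, for $i=1,\dots,n$, $$\dot\rho_i=k_\rho(\rho^*-\rho_i),\qquad \dot\phi_i=\frac{\Delta_i}{s}+k_\phi(\bar\phi_i-\phi_i),\qquad \dot z_i=-k_z z_i,$$ with $\bar\phi_i$ and $\Delta_i$ as defined in the context. Then for every initial condition, as $t\to\infty$, exponentially: $\rho_i\to\rho^*$, $\phi_i-\bar\phi_i\to0$, $\dot\phi_i\to \frac{2\pi}{ns}$, and $z_i\to0$, for all $i$.
   Context: There are $n$ robots with cylindrical coordinates $(\rho_i,\phi_i,z_i)$ relative to a target frame (radius, phase, height), whose dynamics after a feedback transformation are $\dot\rho_i,\dot\phi_i,\dot z_i$ equal to free inputs. The phases $\phi_i(t)$ are treated as real-valued (not reduced modulo $2\pi$), robots indexed in counterclockwise phase order at the initial time. Phase averages: $\bar\phi_1=\frac{\phi_2+\phi_n-2\pi}{2}$, $\bar\phi_i=\frac{\phi_{i+1}+\phi_{i-1}}{2}$ for $2\le i\le n-1$, $\bar\phi_n=\frac{\phi_1+2\pi+\phi_{n-1}}{2}$. Phase half-differences: $\Delta_1=\frac{\phi_2-\phi_n+2\pi}{2}$, $\Delta_i=\frac{\phi_{i+1}-\phi_{i-1}}{2}$ for $2\le i\le n-1$, $\Delta_n=\frac{\phi_1+2\pi-\phi_{n-1}}{2}$. *)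

(* Defs.v *)
From Stdlib Require Export Reals.
Open Scope R_scope.

(* Robots indexed 0..n-1 (paper's 1..n shifted by one); phases are real-valued. *)

Definition phibar (n : nat) (phi : nat -> R -> R) (i : nat) (t : R) : R :=
  if Nat.eqb i 0 then (phi 1%nat t + phi (n - 1)%nat t - 2 * PI) / 2
  else if Nat.eqb i (n - 1) then (phi 0%nat t + 2 * PI + phi (n - 2)%nat t) / 2
  else (phi (i + 1)%nat t + phi (i - 1)%nat t) / 2.

Definition phiDelta (n : nat) (phi : nat -> R -> R) (i : nat) (t : R) : R :=
  if Nat.eqb i 0 then (phi 1%nat t - phi (n - 1)%nat t + 2 * PI) / 2
  else if Nat.eqb i (n - 1) then (phi 0%nat t + 2 * PI - phi (n - 2)%nat t) / 2
  else (phi (i + 1)%nat t - phi (i - 1)%nat t) / 2.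

(* Main.v *)
From Stdlib Require Import Reals Lra Lia Psatz FunctionalExtensionality.
Require Import Defs.
Open Scope R_scope.

Fixpoint sm (f : nat -> R) (k : nat) : R :=
  match k with O => 0 | S k => sm f k + f k end.

Lemma sm_ext f g k : (forall i, (i < k)%nat -> f i = g i) -> sm f k = sm g k.
Proof. induction k; simpl; intros H; auto. rewrite IHk by (intros; apply H; lia). rewrite H by lia; auto. Qed.
Lemma sm_le f g k : (forall i, (i < k)%nat -> f i <= g i) -> sm f k <= sm g k.
Proof. induction k; simpl; intros H; [lra|]. assert (sm f k <= sm g k) by (apply IHk; intros; apply H; lia). assert (f k <= g k) by (apply H; lia). lra. Qed.
Lemma sm_plus f g k : sm (fun i => f i + g i) k = sm f k + sm g k.
Proof. induction k; simpl; lra. Qed.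
Lemma sm_scal a f k : sm (fun i => a * f i) k = a * sm f k.
Proof. induction k; simpl; [ring|rewrite IHk; ring]. Qed.
Lemma sm_const c k : sm (fun _ => c) k = INR k * c.
Proof. induction k; simpl sm; [simpl; ring|rewrite IHk, S_INR; ring]. Qed.
Lemma sm_nonneg f k : (forall i, (i < k)%nat -> 0 <= f i) -> 0 <= sm f k.
Proof. intros H. replace 0 with (sm (fun _ => 0) k). apply sm_le; auto. rewrite sm_const; ring. Qed.
Lemma sm_term f k j : (forall i, (i < k)%nat -> 0 <= f i) -> (j < k)%nat -> f j <= sm f k.
Proof. induction k; intros H Hj; [lia|simpl]. destruct (Nat.eq_dec j k). subst k. assert (0 <= sm f j) by (apply sm_nonneg; intros; apply H; lia). lra.
 assert (f j <= sm f k) by (apply IHk; [intros; apply H|]; lia). assert (0 <= f k) by (apply H; lia). lra. Qed.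
Lemma sm_mono f k k' : (forall i, (i < k')%nat -> 0 <= f i) -> (k <= k')%nat -> sm f k <= sm f k'.
Proof. intros H Hk. induction Hk; [lra|simpl]. assert (0 <= f m) by (apply H; lia). assert (sm f k <= sm f m) by (apply IHHk; intros; apply H; lia). lra. Qed.
Lemma sm_abs f k : Rabs (sm f k) <= sm (fun i => Rabs (f i)) k.
Proof. induction k; simpl. rewrite Rabs_R0; lra. eapply Rle_trans. apply Rabs_triang. lra. Qed.
Lemma sm_shift f k : sm f (S k) = f 0%nat + sm (fun i => f (S i)) k.
Proof. induction k. simpl; ring. change (sm f (S (S k))) with (sm f (S k) + f (S k)). rewrite IHk. simpl. ring. Qed.

Definition nx (n i : nat) : nat := if Nat.eqb i (n-1) then 0%nat else S i.
Definition pv (n i : nat) : nat := if Nat.eqb i 0 then (n-1)%nat else (i-1)%nat.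

Lemma nx_lt n i : (i < n)%nat -> (nx n i < n)%nat.
Proof. unfold nx; destruct (Nat.eqb_spec i (n-1)); lia. Qed.
Lemma pv_nx n j : (j < n)%nat -> pv n (nx n j) = j.
Proof. unfold nx, pv; destruct (Nat.eqb_spec j (n-1)); simpl; [lia|]. replace (j-0)%nat with j by lia. reflexivity. Qed.

Lemma sm_next F n : (1 <= n)%nat -> sm (fun i => F (nx n i)) n = sm F n.
Proof.
  intros Hn. destruct n as [|m]; [lia|].
  simpl sm at 1. rewrite sm_shift.
  rewrite (sm_ext _ (fun i => F (S i))).
  unfold nx. replace (S m - 1)%nat with m by lia. rewrite Nat.eqb_refl. ring.
  intros i Hi. unfold nx. destruct (Nat.eqb_spec i (S m - 1)); [lia|auto].
Qed.

Lemma sm_tele F n : (1 <= n)%nat -> sm (fun i => F (nx n i) - F i) n = 0.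
Proof. intros. rewrite (sm_ext _ (fun i => F (nx n i) + (-1) * F i)) by (intros; ring).
 rewrite sm_plus, sm_scal, sm_next by auto. ring. Qed.

Lemma d_ext f g t l l' : derivable_pt_lim f t l -> (forall x, f x = g x) -> l = l' -> derivable_pt_lim g t l'.
Proof. intros H E El. replace g with f by (apply functional_extensionality; auto). subst; auto. Qed.
Lemma d_plus f g t a b : derivable_pt_lim f t a -> derivable_pt_lim g t b -> derivable_pt_lim (fun x => f x + g x) t (a + b).
Proof. apply derivable_pt_lim_plus. Qed.
Lemma d_minus f g t a b : derivable_pt_lim f t a -> derivable_pt_lim g t b -> derivable_pt_lim (fun x => f x - g x) t (a - b).
Proof. apply derivable_pt_lim_minus. Qed.
Lemma d_mult f g t a b : derivable_pt_lim f t a -> derivable_pt_lim g t b -> derivable_pt_lim (fun x => f x * g x) t (a * g t + f t * b).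
Proof. apply derivable_pt_lim_mult. Qed.
Lemma d_const c t : derivable_pt_lim (fun _ => c) t 0.
Proof. apply derivable_pt_lim_const. Qed.
Lemma d_exp a t : derivable_pt_lim (fun x => exp (a * x)) t (a * exp (a * t)).
Proof. assert (H := derivable_pt_lim_comp (fun x => a * x) exp t a (exp (a*t))).
 eapply d_ext. apply H. eapply d_ext. apply (derivable_pt_lim_scal id a t 1). apply derivable_pt_lim_id.
 intros; reflexivity. ring. apply derivable_pt_lim_exp. intros; reflexivity. ring. Qed.

Lemma dec_lemma W W' : (forall t, derivable_pt_lim W t (W' t)) -> (forall t, 0 <= t -> W' t <= 0) -> forall t, 0 <= t -> W t <= W 0.
Proof. intros HD HN t Ht. destruct (Req_dec t 0). subst; lra.
 destruct (MVT_cor2 W W' 0 t) as [c [Hc Hc2]]. lra. intros; auto.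
 assert (W' c <= 0) by (apply HN; lra). nra. Qed.

Lemma exp_sol x a : (forall t, derivable_pt_lim x t (- a * x t)) -> forall t, 0 <= t -> x t = x 0 * exp (- a * t).
Proof. intros HD.
 assert (H: forall t, 0 <= t -> x t * exp (a * t) = x 0 * exp (a * 0)).
 { intros t Ht. assert (D: forall t, derivable_pt_lim (fun u => x u * exp (a * u)) t 0).
   { intros u. eapply d_ext. apply d_mult. apply HD. apply d_exp. intros; reflexivity. cbv beta; ring. }
   apply Rle_antisym.
   apply (dec_lemma (fun u => x u * exp (a * u)) (fun _ => 0)); auto; intros; lra.
   assert (Hm := dec_lemma (fun u => - (x u * exp (a * u))) (fun _ => 0)).
   cbv beta in Hm. assert (- (x t * exp (a * t)) <= - (x 0 * exp (a * 0))); [|lra]. apply Hm; auto; [|intros; lra].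
   intros u. eapply d_ext. apply (d_minus (fun _ => 0)). apply d_const. apply D. intros; cbv beta; ring. cbv beta; ring. }
 intros t Ht. specialize (H t Ht). rewrite Rmult_0_r, exp_0, Rmult_1_r in H.
 assert (E: exp (a*t) * exp (-a*t) = 1) by (rewrite <- exp_plus; replace (a*t + -a*t) with 0 by ring; apply exp_0).
 rewrite <- H. transitivity (x t * (exp (a*t) * exp (-a*t))). rewrite E; ring. ring. Qed.

Lemma dsum (F : nat -> R -> R) F' k t : (forall i, (i < k)%nat -> derivable_pt_lim (F i) t (F' i)) ->
  derivable_pt_lim (fun x => sm (fun i => F i x) k) t (sm F' k).
Proof. induction k; intros H; simpl.
 apply d_const. apply d_plus. apply IHk; intros; apply H; lia. apply H; lia. Qed.

Lemma poinc (h : nat -> R) n : (1 <= n)%nat -> sm h n = 0 ->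
  sm (fun i => h i ^ 2) n <= 4 * INR n ^ 3 * sm (fun i => (h (nx n i) - h i) ^ 2) n.
Proof.
  intros Hn Hs. set (d := fun i => h (nx n i) - h i).
  set (M := sm (fun i => d i ^ 2) n). set (D := sm (fun i => Rabs (d i)) n).
  fold M. change (sm (fun i => (h (nx n i) - h i) ^ 2) n) with M.
  assert (P1 : forall i, (i < n)%nat -> h i = h 0%nat + sm d i).
  { induction i; intros Hi. simpl; ring. simpl. assert (E := IHi ltac:(lia)).
    replace (d i) with (h (S i) - h i) by (unfold d, nx; destruct (Nat.eqb_spec i (n-1)); [lia|reflexivity]). lra. }
  assert (Dnn : forall i, (i < n)%nat -> 0 <= Rabs (d i)) by (intros; apply Rabs_pos).
  assert (P2 : forall i, (i < n)%nat -> Rabs (sm d i) <= D).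
  { intros i Hi. eapply Rle_trans. apply sm_abs. apply sm_mono; auto; lia. }
  assert (Hn' : 0 < INR n) by (apply lt_0_INR; lia).
  assert (P3 : Rabs (h 0%nat) <= D).
  { rewrite (sm_ext h (fun i => h 0%nat + sm d i)) in Hs by auto.
    rewrite sm_plus, sm_const in Hs.
    assert (Rabs (sm (sm d) n) <= INR n * D).
    { eapply Rle_trans. apply sm_abs. rewrite <- sm_const. apply sm_le. intros; apply P2; lia. }
    assert (INR n * Rabs (h 0%nat) <= INR n * D); [|nra].
    rewrite <- (Rabs_pos_eq (INR n)) by lra. rewrite <- Rabs_mult.
    replace (INR n * h 0%nat) with (- sm (sm d) n) by lra. rewrite Rabs_Ropp, (Rabs_pos_eq (INR n)) by lra; lra. }
  assert (P4 : forall i, (i < n)%nat -> Rabs (h i) <= 2 * D).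
  { intros i Hi. rewrite P1 by auto. eapply Rle_trans. apply Rabs_triang. specialize (P2 i Hi). lra. }
  assert (P5 : forall k, (k < n)%nat -> Rabs (d k) <= sqrt M).
  { intros k Hk. rewrite <- sqrt_Rsqr_abs. apply sqrt_le_1_alt. unfold Rsqr.
    replace (d k * d k) with (d k ^ 2) by ring. apply (sm_term (fun i => d i ^ 2)); auto.
    intros; apply pow2_ge_0. }
  assert (P6 : D <= INR n * sqrt M).
  { unfold D. rewrite <- sm_const. apply sm_le; auto. }
  assert (HM : 0 <= M) by (apply sm_nonneg; intros; apply pow2_ge_0).
  assert (Hsq := sqrt_sqrt M HM).
  assert (D0 : 0 <= D) by (apply sm_nonneg; auto).
  assert (P7 : forall i, (i < n)%nat -> h i ^ 2 <= 4 * INR n ^ 2 * M).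
  { intros i Hi. specialize (P4 i Hi). rewrite <- (pow2_abs (h i)).
    assert (0 <= Rabs (h i)) by apply Rabs_pos.
    assert (Rabs (h i) <= 2 * INR n * sqrt M) by lra.
    assert (0 <= sqrt M) by apply sqrt_pos.
    replace (4 * INR n ^ 2 * M) with ((2 * INR n * sqrt M) ^ 2) by (replace ((2 * INR n * sqrt M) ^ 2) with (4 * INR n ^ 2 * (sqrt M * sqrt M)) by ring; rewrite Hsq; ring).
    apply pow_incr; lra. }
  eapply Rle_trans. apply sm_le. exact P7. rewrite sm_const. lra.
Qed.

Theorem proposition2 (n : nat) (rho_star s k_rho k_z k_phi : R)
  (rho phi z : nat -> R -> R)
  (Hn : (2 <= n)%nat) (Hrs : 0 <= rho_star) (Hs : 0 < s)
  (Hkr : 0 < k_rho) (Hkz : 0 < k_z) (Hkp : 0 < k_phi)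
  (Hord : forall i, (i + 1 < n)%nat -> phi i 0 <= phi (i + 1)%nat 0)
  (Hwrap : phi (n - 1)%nat 0 <= phi 0%nat 0 + 2 * PI)
  (Hrho : forall i t, (i < n)%nat ->
     derivable_pt_lim (rho i) t (k_rho * (rho_star - rho i t)))
  (Hphi : forall i t, (i < n)%nat ->
     derivable_pt_lim (phi i) t
       (phiDelta n phi i t / s + k_phi * (phibar n phi i t - phi i t)))
  (Hz : forall i t, (i < n)%nat ->
     derivable_pt_lim (z i) t (- k_z * z i t)) :
  exists C lam : R, 0 < lam /\
    forall i t, (i < n)%nat -> 0 <= t ->
      Rabs (rho i t - rho_star) <= C * exp (- lam * t) /\
      Rabs (phi i t - phibar n phi i t) <= C * exp (- lam * t) /\
      (forall d, derivable_pt_lim (phi i) t d ->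
         Rabs (d - 2 * PI / (INR n * s)) <= C * exp (- lam * t)) /\
      Rabs (z i t) <= C * exp (- lam * t).
Proof.
  assert (Hn' : 0 < INR n) by (apply lt_0_INR; lia).
  set (m := 2 * PI / INR n).
  set (g := fun i t => phi (nx n i) t - phi i t + (if Nat.eqb i (n-1) then 2 * PI else 0)).
  set (h := fun i t => g i t - m).
  assert (F1 : forall i t, (i < n)%nat -> phibar n phi i t - phi i t = (h i t - h (pv n i) t) / 2 /\
     phiDelta n phi i t = (h i t + h (pv n i) t) / 2 + m).
  { intros i t Hi. unfold h, g, phibar, phiDelta, pv, nx.
    repeat match goal with |- context [Nat.eqb ?a ?b] => destruct (Nat.eqb_spec a b) end; try lia.
    all: try (replace (S (i - 1)) with i by lia); try (replace (i + 1)%nat with (S i) by lia); try (replace (n - 2)%nat with (i - 1)%nat by lia).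
    all: try subst; split; lra. }
  assert (F2 : forall i t, (i < n)%nat -> phiDelta n phi i t = (h i t + h (pv n i) t) / 2 + m) by (intros; apply F1; auto).
  assert (F1' : forall i t, (i < n)%nat -> phibar n phi i t - phi i t = (h i t - h (pv n i) t) / 2) by (intros; apply F1; auto).
  clear F1. rename F1' into F1.
  assert (pv_lt : forall i, (i < n)%nat -> (pv n i < n)%nat) by (intros i Hi; unfold pv; destruct (Nat.eqb_spec i 0); lia).
  set (dphi := fun i t => (h i t + h (pv n i) t) / (2 * s) + m / s + k_phi * (h i t - h (pv n i) t) / 2).
  assert (Dphi : forall i t, (i < n)%nat -> derivable_pt_lim (phi i) t (dphi i t)).
  { intros i t Hi. eapply d_ext. apply (Hphi i t Hi). intros; reflexivity.
    rewrite F1, F2 by auto. unfold dphi. field. lra. }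
  set (Gd := fun i t => (h (nx n i) t - h (pv n i) t) / (2 * s) + k_phi * (h (nx n i) t - 2 * h i t + h (pv n i) t) / 2).
  assert (Dh : forall i t, (i < n)%nat -> derivable_pt_lim (h i) t (Gd i t)).
  { intros i t Hi. eapply d_ext. apply d_minus. apply d_plus. apply d_minus.
    apply (Dphi (nx n i) t (nx_lt n i Hi)). apply (Dphi i t Hi). apply d_const. apply d_const.
    intros; reflexivity. unfold dphi, Gd. rewrite (pv_nx n i Hi). field. lra. }
  assert (Sumh : forall t, sm (fun i => h i t) n = 0).
  { intros t. unfold h, g.
    rewrite (sm_ext _ (fun i => (phi (nx n i) t - phi i t) + ((if Nat.eqb i (n-1) then 2 * PI else 0) + - m))) by (intros; ring).
    rewrite !sm_plus, (sm_tele (fun j => phi j t)), sm_const by lia.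
    assert (Hif : sm (fun i => if Nat.eqb i (n-1) then 2 * PI else 0) n = 2 * PI).
    { destruct n as [|k]; [lia|]. simpl sm at 1. replace (k - 0)%nat with k by lia.
      rewrite Nat.eqb_refl. rewrite (sm_ext _ (fun _ => 0)). rewrite sm_const. ring.
      intros i Hi. destruct (Nat.eqb_spec i k); [lia|reflexivity]. }
    rewrite Hif. unfold m. field. lra. }
  set (V := fun t => sm (fun i => h i t ^ 2) n).
  set (M := fun t => sm (fun i => (h (nx n i) t - h i t) ^ 2) n).
  assert (DV : forall t, derivable_pt_lim V t (- k_phi * M t)).
  { intros t. eapply d_ext. apply (dsum (fun i t => h i t ^ 2) (fun i => 2 * h i t * Gd i t)).
    intros i Hi. eapply d_ext. apply d_mult; apply (Dh i t Hi). intros; cbv beta; ring. ring.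
    intros; reflexivity.
    set (F := fun j => h j t * h (pv n j) t). set (Q := fun j => h j t ^ 2).
    rewrite (sm_ext _ (fun i => (1/s - k_phi) * (F (nx n i) - F i) + (k_phi * (Q (nx n i) - Q i) + (- k_phi) * (h (nx n i) t - h i t) ^ 2))).
    rewrite !sm_plus, !sm_scal, !sm_tele by lia. unfold M. ring.
    intros i Hi. unfold F, Q, Gd. rewrite (pv_nx n i Hi). field. lra. }
  set (c := k_phi / (4 * INR n ^ 3)).
  assert (Hc : 0 < c) by (unfold c; apply Rdiv_lt_0_compat; [lra| apply Rmult_lt_0_compat; [lra| apply pow_lt; lra]]).
  assert (Vdec : forall t, 0 <= t -> V t <= V 0 * exp (- c * t)).
  { assert (W : forall t, 0 <= t -> V t * exp (c * t) <= V 0 * exp (c * 0)).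
    { apply (dec_lemma (fun t => V t * exp (c * t)) (fun t => - k_phi * M t * exp (c * t) + V t * (c * exp (c * t)))).
      intros t. eapply d_ext. apply d_mult. apply DV. apply (d_exp c t). intros; reflexivity. reflexivity.
      intros t Ht. assert (P := poinc (fun i => h i t) n ltac:(lia) (Sumh t)).
      fold (V t) in P. change (sm (fun i => (h (nx n i) t - h i t) ^ 2) n) with (M t) in P.
      assert (0 < exp (c * t)) by apply exp_pos.
      assert (c * V t <= k_phi * M t).
      { unfold c. assert (0 < 4 * INR n ^ 3) by (apply Rmult_lt_0_compat; [lra| apply pow_lt; lra]).
        replace (k_phi / (4 * INR n ^ 3) * V t) with (k_phi * (V t / (4 * INR n ^ 3))) by (field; lra).
        apply Rmult_le_compat_l; [lra|].
        apply Rmult_le_reg_l with (4 * INR n ^ 3); auto.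
        replace (4 * INR n ^ 3 * (V t / (4 * INR n ^ 3))) with (V t) by (field; lra). exact P. }
      nra. }
    intros t Ht. specialize (W t Ht). rewrite Rmult_0_r, exp_0, Rmult_1_r in W.
    assert (E: exp (c*t) * exp (-c*t) = 1) by (rewrite <- exp_plus; replace (c*t + -c*t) with 0 by ring; apply exp_0).
    assert (0 < exp (- c * t)) by apply exp_pos.
    transitivity (V t * exp (c * t) * exp (- c * t)). rewrite Rmult_assoc, E. lra.
    apply Rmult_le_compat_r; lra. }
  assert (expm : forall a b t, 0 <= t -> b <= a -> exp (- a * t) <= exp (- b * t)).
  { intros a b t Ht Hab. destruct (Req_dec (a*t) (b*t)) as [E|E].
    replace (-a*t) with (-b*t) by lra. lra. left. apply exp_increasing. nra. }
  set (B := sqrt (V 0)).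
  assert (HB : 0 <= B) by apply sqrt_pos.
  assert (V0 : 0 <= V 0) by (apply sm_nonneg; intros; apply pow2_ge_0).
  assert (Hh : forall i t, (i < n)%nat -> 0 <= t -> Rabs (h i t) <= B * exp (- (c/2) * t)).
  { intros i t Hi Ht. assert (E1 : h i t ^ 2 <= V t) by (apply (sm_term (fun i => h i t ^ 2)); auto; intros; apply pow2_ge_0).
    assert (E2 := Vdec t Ht).
    assert (E3 : exp (- c * t) = exp (- (c/2) * t) * exp (- (c/2) * t)) by (rewrite <- exp_plus; f_equal; field).
    assert (E4 : V 0 = B * B) by (unfold B; rewrite sqrt_sqrt; auto).
    rewrite <- pow2_abs in E1. assert (0 <= Rabs (h i t)) by apply Rabs_pos.
    assert (0 < exp (- (c/2) * t)) by apply exp_pos. rewrite E3, E4 in E2.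
    set (e := exp (- (c/2) * t)) in *. set (a := Rabs (h i t)) in *.
    assert (a ^ 2 <= (B * e) ^ 2) by (replace ((B*e)^2) with (B*B*(e*e)) by ring; lra).
    destruct (Rle_dec a (B*e)) as [|Hne]; auto. exfalso. assert (B*e < a) by lra. assert (0 <= B*e) by nra. nra. }
  set (C := sm (fun i => Rabs (rho i 0 - rho_star) + Rabs (z i 0)) n + (1/s + k_phi + 1) * B).
  exists C, (Rmin k_rho (Rmin k_z (c/2))).
  assert (Hl1 := Rmin_l k_rho (Rmin k_z (c/2))). assert (Hl2 := Rmin_r k_rho (Rmin k_z (c/2))).
  assert (Hl3 := Rmin_l k_z (c/2)). assert (Hl4 := Rmin_r k_z (c/2)).
  set (lam := Rmin k_rho (Rmin k_z (c/2))) in *.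
  split. unfold lam. apply Rmin_glb_lt; [lra| apply Rmin_glb_lt; lra].
  intros i t Hi Ht.
  assert (Ce : 0 < exp (- lam * t)) by apply exp_pos.
  assert (Cterm : Rabs (rho i 0 - rho_star) + Rabs (z i 0) <= sm (fun i => Rabs (rho i 0 - rho_star) + Rabs (z i 0)) n).
  { apply (sm_term (fun i => Rabs (rho i 0 - rho_star) + Rabs (z i 0))); auto. intros; assert (0 <= Rabs (rho i0 0 - rho_star)) by apply Rabs_pos; assert (0 <= Rabs (z i0 0)) by apply Rabs_pos; lra. }
  assert (Cnn : 0 <= sm (fun i => Rabs (rho i 0 - rho_star) + Rabs (z i 0)) n).
  { eapply Rle_trans; [|exact Cterm]. assert (0 <= Rabs (rho i 0 - rho_star)) by apply Rabs_pos; assert (0 <= Rabs (z i 0)) by apply Rabs_pos; lra. }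
  assert (Hsi : 0 < 1/s) by (apply Rdiv_lt_0_compat; lra).
  assert (CB : forall X, 0 <= X -> X <= Rabs (rho i 0 - rho_star) + Rabs (z i 0) + 0 -> X * exp (- lam * t) <= C * exp (- lam * t)).
  { intros X HX HX2. apply Rmult_le_compat_r; [lra|]. unfold C. nra. }
  assert (Eh := Hh i t Hi Ht). assert (Ehp := Hh (pv n i) t (pv_lt i Hi) Ht).
  assert (ex2 : exp (- (c/2) * t) <= exp (- lam * t)) by (apply expm; lra).
  assert (0 <= Rabs (rho i 0 - rho_star)) by apply Rabs_pos. assert (0 <= Rabs (z i 0)) by apply Rabs_pos.
  split; [|split; [|split]].
  - rewrite (exp_sol (fun t => rho i t - rho_star) k_rho); auto.
    rewrite Rabs_mult, (Rabs_pos_eq (exp _)) by (left; apply exp_pos).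
    eapply Rle_trans. apply Rmult_le_compat_l. apply Rabs_pos. apply (expm k_rho lam t Ht Hl1).
    apply CB; lra.
    intros u. eapply d_ext. apply d_minus. apply (Hrho i u Hi). apply d_const. intros; reflexivity. ring.
  - replace (phi i t - phibar n phi i t) with (- (phibar n phi i t - phi i t)) by ring.
    rewrite Rabs_Ropp, F1 by auto.
    assert (Rabs ((h i t - h (pv n i) t) / 2) <= B * exp (- lam * t)).
    { unfold Rdiv. rewrite Rabs_mult, (Rabs_pos_eq (/2)) by lra.
      assert (Rabs (h i t - h (pv n i) t) <= Rabs (h i t) + Rabs (h (pv n i) t)) by (unfold Rminus; eapply Rle_trans; [apply Rabs_triang| rewrite Rabs_Ropp; lra]).
      assert (B * exp (- (c/2) * t) <= B * exp (- lam * t)) by (apply Rmult_le_compat_l; lra).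
      lra. }
    eapply Rle_trans; [eassumption|]. apply Rmult_le_compat_r; [lra|]. unfold C. nra.
  - intros d Hd. rewrite (uniqueness_limite _ _ _ _ Hd (Dphi i t Hi)). unfold dphi.
    replace (2 * PI / (INR n * s)) with (m / s) by (unfold m; field; lra).
    replace ((h i t + h (pv n i) t) / (2 * s) + m / s + k_phi * (h i t - h (pv n i) t) / 2 - m / s)
      with ((1/(2*s) + k_phi/2) * h i t + (1/(2*s) - k_phi/2) * h (pv n i) t) by (field; lra).
    eapply Rle_trans. apply Rabs_triang. rewrite !Rabs_mult.
    assert (Rabs (h i t) <= B * exp (- lam * t)) by (eapply Rle_trans; [eassumption|]; apply Rmult_le_compat_l; lra).
    assert (Rabs (h (pv n i) t) <= B * exp (- lam * t)) by (eapply Rle_trans; [eassumption|]; apply Rmult_le_compat_l; lra).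
    rewrite (Rabs_pos_eq (1/(2*s) + k_phi/2)) by (assert (0 < 1/(2*s)) by (apply Rdiv_lt_0_compat; lra); lra).
    assert (Ra : Rabs (1/(2*s) - k_phi/2) <= 1/(2*s) + k_phi/2).
    { apply Rabs_le. assert (0 < 1/(2*s)) by (apply Rdiv_lt_0_compat; lra). lra. }
    assert (0 <= Rabs (h (pv n i) t)) by apply Rabs_pos.
    assert (1/(2*s) = (1/s)/2) by (field; lra).
    assert (0 <= B * exp (- lam * t)) by nra.
    apply Rle_trans with ((1/s + k_phi) * (B * exp (- lam * t))).
    nra. unfold C. nra.
  - rewrite (exp_sol (z i) k_z); auto.
    rewrite Rabs_mult, (Rabs_pos_eq (exp _)) by (left; apply exp_pos).
    eapply Rle_trans. apply Rmult_le_compat_l. apply Rabs_pos. apply (expm k_z lam t Ht). lra.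
    apply CB; lra.
Qed.
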